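(* Let $G$ be a group acting on a set $X$ and $Y$ a finite subset of $X$ such that $\mu=\inf_{A\in\mathcal{P}_{\mathrm{fin}}(G)\setminus\{\emptyset\}}\frac{|A\cdot Y|}{|A|}>0$. Then for any $\lambda\in\,]0,\mu]$ and any nonempty finite subset $A_0$ of $G$ there exists a subgroup $H$ of $G$ containing $G_Y$ such that \[\lambda\max_{A\subset G,\ A\cdot Y=A_0\cdot Y}|A|+|Y|\leq\lambda|H|+|A_0\cdot Y|.\]
   Context: $\mathcal{P}_{\mathrm{fin}}(G)$ is the set of finite subsets of $G$; $A\cdot Y=\{a\cdot y\mid a\in A,y\in Y\}$; $G_Y=\{g\in G\mid g\cdot Y=Y\}$. *)

(* Defs.v *)
From Stdlib Require Import Reals List.
From Coquelicot Require Import Coquelicot.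
Import ListNotations.
Open Scope R_scope.

Definition is_group {G : Type} (mul : G -> G -> G) (one : G) (inv : G -> G) : Prop :=
  (forall a b c, mul a (mul b c) = mul (mul a b) c) /\
  (forall a, mul one a = a) /\ (forall a, mul a one = a) /\
  (forall a, mul (inv a) a = one) /\ (forall a, mul a (inv a) = one).

Definition is_action {G X : Type} (mul : G -> G -> G) (one : G) (act : G -> X -> X) : Prop :=
  (forall x, act one x = x) /\ (forall g h x, act (mul g h) x = act g (act h x)).

Definition finite_pred {T : Type} (A : T -> Prop) : Prop :=
  exists l : list T, forall x, A x <-> In x l.

Definition setcard {T : Type} (A : T -> Prop) (n : nat) : Prop :=
  exists l : list T, NoDup l /\ (forall x, A x <-> In x l) /\ length l = n.

Definition nonempty {T : Type} (A : T -> Prop) : Prop := exists x, A x.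

Definition same_set {T : Type} (A B : T -> Prop) : Prop := forall x, A x <-> B x.

Definition setact {G X : Type} (act : G -> X -> X) (A : G -> Prop) (Y : X -> Prop) : X -> Prop :=
  fun x => exists a y, A a /\ Y y /\ x = act a y.

Definition setstab {G X : Type} (act : G -> X -> X) (Y : X -> Prop) : G -> Prop :=
  fun g => same_set (setact act (fun h => h = g) Y) Y.

Definition is_subgroup {G : Type} (mul : G -> G -> G) (one : G) (inv : G -> G)
  (H : G -> Prop) : Prop :=
  H one /\ (forall a b, H a -> H b -> H (mul a b)) /\ (forall a, H a -> H (inv a)).

Definition mu_inf {G X : Type} (act : G -> X -> X) (Y : X -> Prop) : Rbar :=
  Glb_Rbar (fun r => exists (A : G -> Prop) (n m : nat),
    nonempty A /\ setcard A n /\ setcard (setact act A Y) m /\ r = INR m / INR n).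

(* Main.v *)
Require Import Defs.
From Stdlib Require Import Reals List Lia ZArith ClassicalEpsilon Classical FinFun Lra.
From Coquelicot Require Import Coquelicot.
Import ListNotations.

Section FinT.
Context {T : Type}.
Definition deq : forall x y : T, {x = y} + {x <> y} :=
  fun x y => excluded_middle_informative (x = y).
Definition pdec (P : T -> Prop) : T -> bool :=
  fun x => if excluded_middle_informative (P x) then true else false.
Lemma pdecP (P : T -> Prop) x : pdec P x = true <-> P x.
Proof. unfold pdec; destruct excluded_middle_informative; split; congruence. Qed.

Lemma setcard_unique (A : T -> Prop) n m : setcard A n -> setcard A m -> n = m.
Proof.
  intros [l [N1 [E1 L1]]] [l' [N2 [E2 L2]]]; subst.
  apply Nat.le_antisymm; apply NoDup_incl_length; auto; intros x Hx.
  - apply E2, E1, Hx.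
  - apply E1, E2, Hx.
Qed.

Lemma finite_setcard (A : T -> Prop) : finite_pred A -> exists n, setcard A n.
Proof.
  intros [l Hl]. exists (length (nodup deq l)). exists (nodup deq l).
  split; [apply NoDup_nodup|split; auto].
  intro x; rewrite nodup_In; apply Hl.
Qed.

Lemma setcard_finite (A : T -> Prop) n : setcard A n -> finite_pred A.
Proof. intros [l [_ [E _]]]; exists l; auto. Qed.

Definition card (A : T -> Prop) : nat :=
  match excluded_middle_informative (exists n, setcard A n) with
  | left H => proj1_sig (constructive_indefinite_description _ H)
  | right _ => 0%nat end.

Lemma card_spec A : finite_pred A -> setcard A (card A).
Proof.
  intro F. unfold card. destruct excluded_middle_informative as [H|H].
  - destruct constructive_indefinite_description; auto.
  - exfalso; apply H, finite_setcard, F.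
Qed.

Lemma card_eq A n : setcard A n -> card A = n.
Proof.
  intro S. eapply setcard_unique; [apply card_spec, (setcard_finite _ _ S)|exact S].
Qed.

Lemma setcard_ext (A B : T -> Prop) n : (forall x, A x <-> B x) -> setcard A n -> setcard B n.
Proof. intros E [l [N [H L]]]; exists l; repeat split; auto; intros; [apply H, E|apply E, H]; auto. Qed.

Lemma finite_ext (A B : T -> Prop) : (forall x, A x <-> B x) -> finite_pred A -> finite_pred B.
Proof. intros E [l H]; exists l; intro x; rewrite <- E; auto. Qed.

Lemma card_ext (A B : T -> Prop) : (forall x, A x <-> B x) -> finite_pred A -> card A = card B.
Proof. intros E F. symmetry; apply card_eq, (setcard_ext A); auto; apply card_spec; auto. Qed.

Lemma finite_sub (A B : T -> Prop) : finite_pred B -> (forall x, A x -> B x) -> finite_pred A.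
Proof.
  intros [l H] S. exists (filter (pdec A) l). intro x. rewrite filter_In, pdecP.
  split; [intro a; split; auto; apply H; auto| tauto].
Qed.

Lemma card_sub (A B : T -> Prop) : finite_pred B -> (forall x, A x -> B x) -> (card A <= card B)%nat.
Proof.
  intros FB S. assert (FA := finite_sub A B FB S).
  destruct (card_spec A FA) as [la [NA [EA LA]]]. destruct (card_spec B FB) as [lb [NB [EB LB]]].
  rewrite <- LA, <- LB. apply NoDup_incl_length; auto. intros x Hx; apply EB, S, EA, Hx.
Qed.

Lemma card_sub_eq (A B : T -> Prop) : finite_pred B -> (forall x, A x -> B x) ->
  (card B <= card A)%nat -> forall x, B x -> A x.
Proof.
  intros FB S Le x Bx. assert (FA := finite_sub A B FB S).
  destruct (card_spec A FA) as [la [NA [EA LA]]]. destruct (card_spec B FB) as [lb [NB [EB LB]]].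
  apply NNPP; intro nA.
  assert (length (x :: la) <= length lb)%nat.
  { apply NoDup_incl_length. constructor; auto. intro I; apply nA, EA, I.
    intros y [<-|Hy]; apply EB; auto. apply S, EA, Hy. }
  simpl in H; lia.
Qed.

Lemma card_pos_nonempty A : finite_pred A -> (0 < card A)%nat -> nonempty A.
Proof.
  intros F P. destruct (card_spec A F) as [[|x l] [N [E L]]]; simpl in L; [lia|].
  exists x; apply E; left; auto.
Qed.

Lemma card_nonempty_pos A : finite_pred A -> nonempty A -> (1 <= card A)%nat.
Proof.
  intros F [x Ax]. destruct (card_spec A F) as [[|y l] [N [E L]]]; simpl in L; [|lia].
  apply E in Ax; destruct Ax.
Qed.

Definition union (A B : T -> Prop) := fun x => A x \/ B x.
Definition inter (A B : T -> Prop) := fun x => A x /\ B x.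

Lemma finite_union A B : finite_pred A -> finite_pred B -> finite_pred (union A B).
Proof.
  intros [la Ha] [lb Hb]; exists (la ++ lb); intro x; rewrite in_app_iff; unfold union; firstorder.
Qed.

Lemma card_union_inter A B : finite_pred A -> finite_pred B ->
  (card (union A B) + card (inter A B) = card A + card B)%nat.
Proof.
  intros FA FB.
  destruct (card_spec A FA) as [la [NA [EA LA]]]. destruct (card_spec B FB) as [lb [NB [EB LB]]].
  rewrite (card_eq (inter A B) (length (filter (pdec A) lb))).
  rewrite (card_eq (union A B) (length (la ++ filter (fun x => negb (pdec A x)) lb))).
  - rewrite length_app, <- LA, <- LB, <- (filter_length (pdec A) lb). lia.
  - exists (la ++ filter (fun x => negb (pdec A x)) lb); split; [|split; [|reflexivity]].
    + apply NoDup_app; [exact NA| apply NoDup_filter; exact NB|].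
      intros x I1 I2. apply filter_In in I2. destruct I2 as [_ I2].
      apply EA, pdecP in I1. rewrite I1 in I2; discriminate.
    + intro x. unfold union. rewrite in_app_iff, filter_In, <- EA, <- EB.
      destruct (pdec A x) eqn:E; [apply pdecP in E|]; simpl; split; try tauto.

  - exists (filter (pdec A) lb); split; [apply NoDup_filter; auto|split; [|reflexivity]].
    intro x; unfold inter; rewrite filter_In, pdecP, <- EB; tauto.
Qed.

Lemma bounded_finite (A : T -> Prop) K :
  (forall l, NoDup l -> (forall x, In x l -> A x) -> (length l <= K)%nat) -> finite_pred A.
Proof.
  intro Hb. apply NNPP; intro NF.
  assert (forall k, exists l, NoDup l /\ (forall x, In x l -> A x) /\ length l = k).
  { induction k as [|k [l [N [I L]]]]. exists []; split; [constructor|split; [intros x []|reflexivity]].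
    assert (exists x, A x /\ ~ In x l).
    { apply NNPP; intro C; apply NF. exists l; intro x; split; auto.
      intro a; apply NNPP; intro ni; apply C; eauto. }
    destruct H as [x [Ax nx]]. exists (x :: l); repeat split; simpl; auto.
    constructor; auto. intros y [<-|Hy]; auto. }
  destruct (H (S K)) as [l [N [I L]]]. specialize (Hb l N I); lia.
Qed.
End FinT.

Section Img.
Context {T U : Type}.
Definition image (f : T -> U) (A : T -> Prop) : U -> Prop := fun y => exists x, A x /\ y = f x.
Lemma card_image (f : T -> U) A : (forall x y, f x = f y -> x = y) -> finite_pred A ->
  finite_pred (image f A) /\ card (image f A) = card A.
Proof.
  intros Inj F. destruct (card_spec A F) as [l [N [E L]]].
  assert (S : setcard (image f A) (card A)).
  { exists (map f l); split; [apply FinFun.Injective_map_NoDup; auto|split].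
    - intro y; unfold image; rewrite in_map_iff. split; intros [x [a b]]; exists x; split; auto.
      apply E; auto. apply E; auto.
    - rewrite length_map; auto. }
  split; [eapply setcard_finite; eauto| apply card_eq; auto].
Qed.
End Img.

Lemma finite_image {T U : Type} (f : T -> U) A : finite_pred A -> finite_pred (image f A).
Proof.
  intros [l H]; exists (map f l); intro y; unfold image; rewrite in_map_iff.
  split; intros [x [a b]]; exists x; split; auto; apply H; auto.
Qed.
Open Scope R_scope.

Lemma nat_arch (r : R) : exists n : nat, r < INR n.
Proof.
  destruct (archimed r) as [H _].
  destruct (Z_le_gt_dec (up r) 0) as [L|L].
  - exists 0%nat; simpl. apply IZR_le in L. lra.
  - exists (Z.to_nat (up r)). rewrite INR_IZR_INZ, Z2Nat.id by lia. lra.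
Qed.

Lemma nat_min (P : nat -> Prop) : (exists n, P n) -> exists n, P n /\ forall m, P m -> (n <= m)%nat.
Proof.
  intros [n Pn]. revert Pn. induction n as [n IH] using (well_founded_induction lt_wf). intro Pn.
  destruct (classic (exists m, P m /\ (m < n)%nat)) as [[m [Pm L]]|C].
  - apply (IH m L Pm).
  - exists n; split; auto. intros m Pm. apply NNPP; intro; apply C; exists m; split; auto; lia.
Qed.

Lemma choose_pq (lam D : R) : 0 < lam -> 0 <= D ->
  exists p q : nat, (0 < p)%nat /\ (0 < q)%nat /\ INR p <= lam * INR q /\
   forall k : nat, INR p * INR k <= D * INR q -> lam * INR k <= D.
Proof.
  intros Hl HD.
  destruct (nat_min (fun k => lam * INR k > D)) as [k0 [Hk0 Mk0]].
  { destruct (nat_arch (D / lam)) as [k Hk]. exists k.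
    apply (Rmult_lt_compat_l lam) in Hk; auto. field_simplify in Hk; lra. }
  assert (k0pos : (0 < k0)%nat). { destruct k0; [simpl in Hk0; lra| lia]. }
  assert (Rk0 : 0 < INR k0) by (apply lt_0_INR; auto).
  set (a := D / INR k0).
  assert (Ha0 : 0 <= a) by (unfold a; apply Rdiv_le_0_compat; lra).
  assert (Hal : a < lam). { unfold a. apply Rmult_lt_reg_r with (INR k0); auto. field_simplify; lra. }
  destruct (nat_arch (1 / (lam - a))) as [q Hq].
  assert (Hq1 : 1 < (lam - a) * INR q).
  { apply (Rmult_lt_compat_l (lam - a)) in Hq; [|lra]. field_simplify in Hq; lra. }
  assert (q0 : (0 < q)%nat). { destruct q; [simpl in Hq1; lra|lia]. }
  destruct (nat_min (fun p => a * INR q < INR p)) as [p [Hp Mp]].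
  { apply nat_arch. }
  assert (p0 : (0 < p)%nat).
  { destruct p; [|lia]. simpl in Hp. assert (0 <= a * INR q) by (apply Rmult_le_pos; auto; apply pos_INR). lra. }
  exists p, q. split; [auto|split;[auto|split]].
  - destruct p as [|p']; [lia|].
    assert (~ (a * INR q < INR p')) by (intro C; specialize (Mp _ C); lia).
    rewrite S_INR. lra.
  - intros k Hk. apply Rnot_lt_le; intro C.
    assert (k0 <= k)%nat by (apply Mk0; lra).
    assert (INR k0 <= INR k) by (apply le_INR; auto).
    assert (a * INR q * INR k0 < INR p * INR k).
    { apply Rlt_le_trans with (INR p * INR k0). apply Rmult_lt_compat_r; auto.
      apply Rmult_le_compat_l; auto. apply pos_INR. }
    unfold a in H1. field_simplify in H1; [|lra]. lra.
Qed.

Section Grp.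
Context {G X : Type} (mul : G -> G -> G) (one : G) (inv : G -> G) (act : G -> X -> X)
  (HG : is_group mul one inv) (Hact : is_action mul one act).

Lemma inv_inv a : inv (inv a) = a.
Proof.
  destruct HG as [As [L1 [R1 [LI RI]]]].
  rewrite <- (R1 (inv (inv a))), <- (LI a), As, LI, L1. reflexivity.
Qed.

Lemma mul_inj g x y : mul g x = mul g y -> x = y.
Proof.
  destruct HG as [As [L1 [R1 [LI RI]]]]. intro E.
  rewrite <- (L1 x), <- (L1 y), <- (LI g), <- !As, E. reflexivity.
Qed.

Lemma act_inj g x y : act g x = act g y -> x = y.
Proof.
  destruct HG as [As [L1 [R1 [LI RI]]]]. destruct Hact as [A1 AM]. intro E.
  rewrite <- (A1 x), <- (A1 y), <- (LI g), !AM, E. reflexivity.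
Qed.
End Grp.

Section SA.
Context {G X : Type} (act : G -> X -> X).

Lemma setact_mono (A B : G -> Prop) Y : (forall g, A g -> B g) ->
  forall x, setact act A Y x -> setact act B Y x.
Proof. intros S x [a [y [Aa [Yy E]]]]; exists a, y; auto. Qed.

Lemma finite_setact A Y : finite_pred A -> finite_pred Y -> finite_pred (setact act A Y).
Proof.
  intros [la Ha] [ly Hy]. exists (flat_map (fun a => map (act a) ly) la).
  intro x. rewrite in_flat_map. split.
  - intros [a [y [Aa [Yy E]]]]. exists a; split; [apply Ha; auto|]. apply in_map_iff; exists y; split; auto. apply Hy; auto.
  - intros [a [Ia Im]]. apply in_map_iff in Im. destruct Im as [y [E Iy]].
    exists a, y; repeat split; auto. apply Ha; auto. apply Hy; auto.
Qed.

Lemma setact_union A B Y x : setact act (union A B) Y x <-> union (setact act A Y) (setact act B Y) x.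
Proof.
  unfold union, setact; split.
  - intros [a [y [[Aa|Ba] [Yy E]]]]; [left|right]; exists a, y; auto.
  - intros [[a [y [Aa [Yy E]]]]|[a [y [Aa [Yy E]]]]]; exists a, y; auto.
Qed.

Lemma setact_inter A B Y x : setact act (inter A B) Y x -> inter (setact act A Y) (setact act B Y) x.
Proof. unfold inter, setact. intros [a [y [[Aa Ba] [Yy E]]]]; split; exists a, y; auto. Qed.
End SA.

Lemma setact_trans {G X : Type} (mul : G -> G -> G) (one : G) (act : G -> X -> X)
  (Hact : is_action mul one act) g A Y x :
  setact act (image (mul g) A) Y x <-> image (act g) (setact act A Y) x.
Proof.
  destruct Hact as [A1 AM]. unfold setact, image; split.
  - intros [a [y [[b [Ab ->]] [Yy ->]]]]. exists (act b y); split; [exists b, y; auto| apply AM].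
  - intros [z [[b [y [Ab [Yy ->]]]] ->]]. exists (mul g b), y. split; [exists b; split; auto|split; auto].
Qed.

Theorem mainTheorem9
  (G X : Type) (mul : G -> G -> G) (one : G) (inv : G -> G) (act : G -> X -> X)
  (HG : is_group mul one inv) (Hact : is_action mul one act)
  (Y : X -> Prop) (HYfin : finite_pred Y)
  (Hmu : Rbar_lt (Finite 0) (mu_inf act Y))
  (lam : R) (Hlam0 : 0 < lam) (Hlammu : Rbar_le (Finite lam) (mu_inf act Y))
  (A0 : G -> Prop) (HA0fin : finite_pred A0) (HA0ne : nonempty A0)
  (nY nA0Y : nat) (HnY : setcard Y nY) (HnA0Y : setcard (setact act A0 Y) nA0Y) :
  exists (H : G -> Prop) (h : nat),
    is_subgroup mul one inv H /\ setcard H h /\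
    (forall g, setstab act Y g -> H g) /\
    (forall A : G -> Prop, same_set (setact act A Y) (setact act A0 Y) ->
       exists n : nat, setcard A n /\
         lam * INR n + INR nY <= lam * INR h + INR nA0Y).
Proof.
  pose proof HG as [As [L1 [R1 [LI RI]]]].
  pose proof Hact as [A1 AM].
  assert (LB : forall A, finite_pred A -> nonempty A ->
            lam * INR (card A) <= INR (card (setact act A Y))).
  { intros A FA NA. set (n := card A). set (m := card (setact act A Y)).
    assert (n1 : (1 <= n)%nat) by (apply card_nonempty_pos; auto).
    assert (E : Rbar_le (mu_inf act Y) (INR m / INR n)).
    { unfold mu_inf. apply (proj1 (Glb_Rbar_correct _)). exists A, n, m.
      split; [auto|split; [apply card_spec; auto|split; [apply card_spec, finite_setact; auto|reflexivity]]]. }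
    pose proof (Rbar_le_trans _ _ _ Hlammu E) as L. simpl in L.
    assert (0 < INR n) by (apply lt_0_INR; lia).
    apply Rmult_le_compat_r with (r:=INR n) in L; [|lra]. field_simplify in L; lra. }
  assert (FA0Y : finite_pred (setact act A0 Y)) by (apply finite_setact; auto).
  assert (EnY : card Y = nY) by (apply card_eq; auto).
  assert (EnA0Y : card (setact act A0 Y) = nA0Y) by (apply card_eq; auto).
  assert (Dn : (nY <= nA0Y)%nat).
  { destruct HA0ne as [a0 Ha0]. rewrite <- EnY, <- EnA0Y.
    rewrite <- (proj2 (card_image (act a0) Y (act_inj mul one inv act HG Hact a0) HYfin)).
    apply card_sub; auto. intros x [y [Yy ->]]. exists a0, y; auto. }
  assert (HD : 0 <= INR nA0Y - INR nY) by (apply le_INR in Dn; lra).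
  destruct (choose_pq lam _ Hlam0 HD) as [p [q [p0 [q0 [Hpq Hk]]]]].
  assert (Vb : forall A, finite_pred A -> nonempty A ->
     (p * card A <= q * card (setact act A Y))%nat).
  { intros A FA NA. apply INR_le. rewrite !mult_INR.
    specialize (LB A FA NA).
    assert (0 <= INR (card A)) by apply pos_INR.
    assert (0 < INR q) by (apply lt_0_INR; auto).
    nra. }
  set (Fne := fun A : G -> Prop => finite_pred A /\ nonempty A).
  destruct (nat_min (fun v => exists A, Fne A /\ (q * card (setact act A Y) = p * card A + v)%nat))
    as [kap [[Ak [FAk EAk]] Mk]].
  { exists (q * card (setact act A0 Y) - p * card A0)%nat, A0. split; [split; auto|].
    specialize (Vb A0 HA0fin HA0ne). lia. }
  assert (minK : forall A, Fne A -> (p * card A + kap <= q * card (setact act A Y))%nat).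
  { intros A [FA NA]. specialize (Vb A FA NA).
    assert (kap <= q * card (setact act A Y) - p * card A)%nat; [|lia].
    apply Mk. exists A; split; [split; auto|lia]. }
  set (Frag := fun F => Fne F /\ (q * card (setact act F Y) = p * card F + kap)%nat).
  assert (Ftr : forall g F, Frag F -> Frag (image (mul g) F) /\ card (image (mul g) F) = card F).
  { intros g F [[FF [x Fx]] EF].
    destruct (card_image (mul g) F (mul_inj mul one inv HG g) FF) as [FI CI].
    assert (FFY : finite_pred (setact act F Y)) by (apply finite_setact; auto).
    destruct (card_image (act g) _ (act_inj mul one inv act HG Hact g) FFY) as [FI2 CI2].
    assert (E2 : card (setact act (image (mul g) F) Y) = card (image (act g) (setact act F Y))).
    { symmetry; apply card_ext; auto. intro z; rewrite (setact_trans mul one act Hact); tauto. }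
    split; [|auto]. split; [split; [auto|exists (mul g x); exists x; auto]|].
    rewrite E2, CI2, CI. auto. }
  assert (Fint : forall F1 F2, Frag F1 -> Frag F2 -> nonempty (inter F1 F2) -> Frag (inter F1 F2)).
  { intros F1 F2 [[FF1 N1] E1] [[FF2 N2] E2] NI.
    assert (FI : finite_pred (inter F1 F2)) by (apply (finite_sub _ F1); auto; intros z []; auto).
    assert (FU : finite_pred (union F1 F2)) by (apply finite_union; auto).
    assert (NU : nonempty (union F1 F2)) by (destruct N1 as [z]; exists z; left; auto).
    assert (FY1 : finite_pred (setact act F1 Y)) by (apply finite_setact; auto).
    assert (FY2 : finite_pred (setact act F2 Y)) by (apply finite_setact; auto).
    pose proof (minK _ (conj FI NI)) as KI. pose proof (minK _ (conj FU NU)) as KU.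
    assert (CUY : card (setact act (union F1 F2) Y) = card (union (setact act F1 Y) (setact act F2 Y))).
    { apply card_ext. intro z; apply setact_union. apply finite_setact; auto. }
    assert (CIY : (card (setact act (inter F1 F2) Y) <= card (inter (setact act F1 Y) (setact act F2 Y)))%nat).
    { apply card_sub. apply (finite_sub _ _ FY1); intros z []; auto. intro z; apply setact_inter. }
    pose proof (card_union_inter _ _ FF1 FF2) as C1.
    pose proof (card_union_inter _ _ FY1 FY2) as C2.
    split; [split; auto|].
    set (a1 := card (setact act (inter F1 F2) Y)) in *.
    set (a2 := card (setact act (union F1 F2) Y)) in *.
    set (b1 := card (inter (setact act F1 Y) (setact act F2 Y))) in *.
    set (b2 := card (union (setact act F1 Y) (setact act F2 Y))) in *.
    nia. }
  destruct (nat_min (fun s => exists F, Frag F /\ card F = s)) as [a [[F0 [FrF0 CF0]] Ma]].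
  { exists (card Ak), Ak. split; [split; auto|auto]. }
  assert (Asub : forall F1 F2 x, Frag F1 -> card F1 = a -> Frag F2 -> F1 x -> F2 x ->
            forall z, F1 z -> F2 z).
  { intros F1 F2 x Fr1 C1 Fr2 X1 X2 z Z1.
    assert (FrI : Frag (inter F1 F2)) by (apply Fint; auto; exists x; split; auto).
    assert (a <= card (inter F1 F2))%nat by (apply Ma; exists (inter F1 F2); auto).
    apply (card_sub_eq (inter F1 F2) F1) in Z1; [destruct Z1; auto|apply Fr1|intros w []; auto|lia]. }
  destruct FrF0 as [[FF0 [x0 Hx0]] EF0].
  set (H := image (mul (inv x0)) F0).
  destruct (Ftr (inv x0) F0) as [FrH CH]. { split; [split; [auto|exists x0; auto]|auto]. }
  fold H in FrH, CH.
  assert (H1 : H one) by (exists x0; split; auto).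
  assert (Key : forall h, H h -> forall z, H z -> H (mul (inv h) z)).
  { intros h Hh z Hz. destruct (Ftr (inv h) H FrH) as [FrK CK].
    apply (Asub (image (mul (inv h)) H) H one FrK); auto. lia. exists h; split; auto.
    exists z; split; auto. }
  assert (FH : finite_pred H) by apply FrH.
  exists H, (card H). split; [|split; [apply card_spec; auto|split]].
  - split; [auto|split].
    + intros u v Hu Hv. assert (Hiu : H (inv u)) by (rewrite <- (R1 (inv u)); apply Key; auto).
      rewrite <- (inv_inv mul one inv HG u). apply Key; auto.
    + intros u Hu. rewrite <- (R1 (inv u)); apply Key; auto.
  - intros g Sg.
    assert (gY : forall y, Y y -> Y (act g y)).
    { intros y Yy. apply Sg. exists g, y; auto. }
    set (K := image (fun h => mul h g) H).
    set (U := union H K).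
    assert (FU : finite_pred U) by (apply finite_union; auto; apply finite_image; auto).
    assert (NU : nonempty U) by (exists one; left; auto).
    pose proof (minK U (conj FU NU)) as KU.
    assert (FHY : finite_pred (setact act H Y)) by (apply finite_setact; auto).
    assert (CU : card (setact act U Y) = card (setact act H Y)).
    { apply card_ext; [|apply finite_setact; auto]. intro z; split.
      - intros [u [y [[Hu|[h [Hh ->]]] [Yy ->]]]].
        + exists u, y; auto.
        + exists h, (act g y). split; auto.
      - apply setact_mono. intros w Hw; left; auto. }
    destruct FrH as [_ EH].
    assert (Le : (card U <= card H)%nat) by nia.
    apply (card_sub_eq H U FU (fun w Hw => or_introl Hw) Le g).
    right; exists one; split; auto.
  - intros A EA.
    destruct (nat_arch (INR nA0Y / lam)) as [Kb HKb].
    assert (FA : finite_pred A).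
    { apply (bounded_finite A Kb). intros l Nl Il.
      destruct l as [|x l'] eqn:El; [simpl; lia|]. rewrite <- El in *.
      set (L := fun z => In z l).
      assert (FL : finite_pred L) by (exists l; intro; tauto).
      assert (CL : card L = length l) by (apply card_eq; exists l; split; [auto|split; [intro; tauto|auto]]).
      assert (NL : nonempty L) by (exists x; unfold L; rewrite El; left; auto).
      specialize (LB L FL NL).
      assert (C2 : (card (setact act L Y) <= card (setact act A0 Y))%nat).
      { apply card_sub; auto. intros z Z. apply EA. revert z Z. apply setact_mono. exact Il. }
      apply le_INR in C2. rewrite EnA0Y, CL in *.
      assert (INR (length l) < INR Kb).
      { apply Rle_lt_trans with (INR nA0Y / lam); auto.
        apply Rmult_le_reg_l with lam; auto. field_simplify; lra. }
      apply INR_lt in H0. lia. }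
    exists (card A). split; [apply card_spec; auto|].
    set (n := card A). set (h := card H).
    destruct (le_lt_dec n h) as [Lnh|Lnh].
    + apply le_INR in Lnh. apply le_INR in Dn. nra.
    + assert (NA : nonempty A) by (apply card_pos_nonempty; auto; lia).
      pose proof (minK A (conj FA NA)) as KA.
      assert (CAY : card (setact act A Y) = nA0Y).
      { rewrite <- EnA0Y. apply card_ext; auto. apply finite_setact; auto. }
      destruct FrH as [_ EH].
      assert (YH : (nY <= card (setact act H Y))%nat).
      { rewrite <- EnY. apply card_sub. apply finite_setact; auto.
        intros y Yy. exists one, y; split; auto. }
      fold n h in KA, EH. rewrite CAY in KA.
      assert (Z : (p * (n - h) + q * nY <= q * nA0Y)%nat) by nia.
      apply le_INR in Z. rewrite plus_INR, !mult_INR, minus_INR in Z by lia.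
      assert (Hk' := Hk (n - h)%nat). rewrite minus_INR in Hk' by lia.
      assert (lam * (INR n - INR h) <= INR nA0Y - INR nY) by (apply Hk'; nra).
      nra.
Qed.
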